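(* Let $G=(V,E)$ be a simple undirected graph with $V=[n]$ and let $k\ge 1$ be an integer. The problem $$\max_{Z\in\mathbb S^n,\;X\in\mathbb R^{n\times k}} \langle I,Z\rangle \ \text{ s.t. } Z_{ij}=0\ (\{i,j\}\in E),\ Z_{ii}\le 1\ (i\in[n]),\ Z_{ii}=\sum_{r\in[k]}X_{ir}\ (i\in[n]),\ Z\ge0,\ X\ge 0,\ \begin{bmatrix}I_k&X^{\top}\\ X&Z\end{bmatrix}\succeq0$$ is equivalent to (has the same optimal value as) the problem $$\theta^3_k(G)=\max_{Z\in\mathbb S^n}\langle I,Z\rangle \ \text{ s.t. } Z_{ij}=0\ (\{i,j\}\in E),\ Z_{ii}\le 1\ (i\in[n]),\ Z\ge 0,\ \begin{bmatrix}k&\mathrm{diag}(Z)^{\top}\\ \mathrm{diag}(Z)&Z\end{bmatrix}\succeq 0,$$ and the latter problem is strictly feasible.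
   Context: $\mathbb S^n$ is the space of real symmetric $n\times n$ matrices; $\langle A,B\rangle=\mathrm{trace}(AB)$; $\mathrm{diag}(Z)$ is the vector of diagonal entries of $Z$; $\ge 0$ denotes entrywise nonnegativity and $\succeq0$ positive semidefiniteness. Strict feasibility means there is a feasible $Z$ for which the matrix in the semidefinite constraint is positive definite. *)

(* Defs.v *)
From HB Require Import structures.
From mathcomp Require Import all_boot all_order all_algebra.
From mathcomp Require Import classical_sets reals.
Set Implicit Arguments. Unset Strict Implicit. Unset Printing Implicit Defensive.
Import Order.TTheory GRing.Theory Num.Theory.
Local Open Scope ring_scope.

Definition simple_graph (n : nat) (E : rel 'I_n) : Prop :=
  (forall i j, E i j = E j i) /\ (forall i, ~~ E i i).

Definition symmetricmx {R : realFieldType} {m : nat} (A : 'M[R]_m) : Prop :=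
  A^T = A.

Definition psdmx {R : realFieldType} {m : nat} (A : 'M[R]_m) : Prop :=
  symmetricmx A /\ forall v : 'rV[R]_m, 0 <= (v *m A *m v^T) 0 0.

Definition pdmx {R : realFieldType} {m : nat} (A : 'M[R]_m) : Prop :=
  symmetricmx A /\ forall v : 'rV[R]_m, v != 0 -> 0 < (v *m A *m v^T) 0 0.

Definition nonnegmx {R : realFieldType} {m p : nat} (A : 'M[R]_(m, p)) : Prop :=
  forall i j, 0 <= A i j.

Definition diagv {R : pzRingType} {n : nat} (Z : 'M[R]_n) : 'cV[R]_n :=
  \col_i Z i i.

Definition common_feas {R : realFieldType} {n : nat} (E : rel 'I_n) (Z : 'M[R]_n) : Prop :=
  symmetricmx Z /\ (forall i j, E i j -> Z i j = 0) /\ (forall i, Z i i <= 1)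
  /\ nonnegmx Z.

Definition lmi1 {R : realFieldType} {n k : nat} (X : 'M[R]_(n, k)) (Z : 'M[R]_n)
  : 'M[R]_(k + n) := block_mx 1%:M X^T X Z.

Definition feas1 {R : realFieldType} {n k : nat} (E : rel 'I_n)
  (Z : 'M[R]_n) (X : 'M[R]_(n, k)) : Prop :=
  common_feas E Z /\ (forall i, Z i i = \sum_(r < k) X i r) /\ nonnegmx X
  /\ psdmx (lmi1 X Z).

Definition lmi3 {R : realFieldType} {n : nat} (k : nat) (Z : 'M[R]_n)
  : 'M[R]_(1 + n) := block_mx (k%:R)%:M (diagv Z)^T (diagv Z) Z.

Definition feas3 {R : realFieldType} {n : nat} (k : nat) (E : rel 'I_n) (Z : 'M[R]_n) : Prop :=
  common_feas E Z /\ psdmx (lmi3 k Z).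

(* optimal values, as suprema of the objective <I,Z> = tr Z over the feasible sets *)
Definition opt1 {R : realType} (n k : nat) (E : rel 'I_n) : R :=
  sup [set \tr Z | Z in [set Z : 'M[R]_n | exists X : 'M[R]_(n, k), feas1 E Z X]].

Definition theta3 {R : realType} (n k : nat) (E : rel 'I_n) : R :=
  sup [set \tr Z | Z in [set Z : 'M[R]_n | feas3 k E Z]].

Definition strictly_feasible3 {R : realType} (n k : nat) (E : rel 'I_n) : Prop :=
  exists Z : 'M[R]_n, common_feas E Z /\ pdmx (lmi3 k Z).

(* Main.v *)
Require Import Defs.
From HB Require Import structures.
From mathcomp Require Import all_boot all_order all_algebra.
From mathcomp Require Import classical_sets reals.
From mathcomp Require Import ring lra.
Set Implicit Arguments. Unset Strict Implicit. Unset Printing Implicit Defensive.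
Import Order.TTheory GRing.Theory Num.Theory.
Local Open Scope ring_scope.

Section S.
Variable R : realFieldType.

Lemma psd_congr m p (A : 'M[R]_m) (P : 'M[R]_(p, m)) :
  psdmx A -> psdmx (P *m A *m P^T).
Proof.
case=> sA qA; split.
  rewrite /Defs.symmetricmx. by rewrite !trmx_mul trmxK sA mulmxA.
move=> v; have := qA (v *m P).
by rewrite trmx_mul !mulmxA.
Qed.

Lemma psdD m (A B : 'M[R]_m) : psdmx A -> psdmx B -> psdmx (A + B).
Proof.
case=> sA qA [sB qB]; split; first by rewrite /Defs.symmetricmx raddfD /= sA sB.
move=> v; rewrite mulmxDr mulmxDl mxE; exact: addr_ge0.
Qed.

Lemma quad_block m1 m2 (A : 'M[R]_m1) B C (D : 'M[R]_m2) (u : 'rV[R]_m1) (w : 'rV[R]_m2) :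
  row_mx u w *m block_mx A B C D *m (row_mx u w)^T =
  u *m A *m u^T + w *m C *m u^T + (u *m B *m w^T + w *m D *m w^T).
Proof.
by rewrite mul_row_block tr_row_mx mul_row_col !mulmxDl.
Qed.

Lemma cauchy m (x : 'I_m -> R) :
  (\sum_(i < m) x i) ^+ 2 <= m%:R * \sum_(i < m) x i ^+ 2.
Proof.
elim: m x => [|m IH] x; first by rewrite !big_ord0 expr0n /= mul0r.
rewrite !big_ord_recr /=.
set S := \sum_(i < m) _; set Q := \sum_(i < m) _.
have H := IH (fun i => x (widen_ord (leqnSn m) i)).
rewrite -/S -/Q in H.
have Q0 : 0 <= Q by apply: sumr_ge0 => i _; exact: sqr_ge0.
set y := x ord_max.
have m0 : 0 <= (m%:R : R) by exact: ler0n.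
rewrite -natr1.
have [me|mp] := eqVneq (m%:R : R) 0.
  rewrite me in H *.
  have HS : S ^+ 2 <= 0 by rewrite mul0r in H.
 have S0 : S = 0 by apply/eqP; rewrite -sqrf_eq0 eq_le HS sqr_ge0.
  by rewrite S0 add0r add0r mul1r lerDr.
have mpos : 0 < (m%:R : R) by rewrite lt_def mp m0.
have key : 2 * S * y <= Q + m%:R * y ^+ 2.
  rewrite -(ler_pM2l mpos).
  have := sqr_ge0 (S - m%:R * y). nra.
nra.
Qed.

Definition ones m : 'cV[R]_m := const_mx 1.

Lemma onesTones m : (ones m)^T *m ones m = (m%:R)%:M.
Proof.
apply/matrixP => i j; rewrite !ord1 !mxE /=.
under eq_bigr do rewrite !mxE mulr1.
by rewrite sumr_const card_ord mulr1n.
Qed.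

Lemma lmi3_congr n k (X : 'M[R]_(n, k)) (Z : 'M[R]_n) :
  (forall i, Z i i = \sum_(r < k) X i r) ->
  lmi3 k Z = block_mx (ones k)^T 0 0 1%:M *m lmi1 X Z *m (block_mx (ones k)^T 0 0 1%:M)^T.
Proof.
move=> HZ.
rewrite /lmi1 /lmi3 tr_block_mx trmxK !trmx0 trmx1 !mulmx_block.
rewrite !mul0mx !mulmx0 !mul1mx !mulmx1 !addr0 !add0r onesTones.
have Hd : X *m ones k = diagv Z.
  apply/matrixP => i j; rewrite !ord1 !mxE HZ.
  by apply: eq_bigr => r _; rewrite !mxE mulr1.
by rewrite -trmx_mul Hd.
Qed.

Lemma lmi1_decomp n k (Z : 'M[R]_n) : (0 < k)%N ->
  let c := (k%:R : R)^-1 in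
  let X := c *: (diagv Z *m (ones k)^T) in
  lmi1 X Z =
  block_mx (c *: ones k) 0 0 1%:M *m lmi3 k Z *m (block_mx (c *: ones k) 0 0 1%:M)^T
  + col_mx 1%:M 0 *m (1%:M - c *: (ones k *m (ones k)^T)) *m (col_mx (1%:M : 'M_k) (0 : 'M_(n, k)))^T.
Proof.
move=> k0 c X.
have kc : (k%:R : R) * c = 1 by rewrite /c mulfV // pnatr_eq0 -lt0n.
rewrite /lmi1 /lmi3 tr_block_mx tr_col_mx !trmx0 trmx1 !mulmx_block.
rewrite mul_col_mx mul_col_row.
rewrite !mul0mx !mulmx0 !mul1mx !mulmx1 !addr0 !add0r add_block_mx !addr0.
rewrite !tr_scalar_mx !mulmx1 /X !linearZ /= trmx_mul trmxK.
congr block_mx.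
- rewrite mul_mx_scalar !scalerA kc scale1r scalemxAl scalerN.
  by rewrite addrCA scalemxAl addrN addr0.
- by rewrite scalemxAl.
Qed.

Lemma psdM k : (0 < k)%N ->
  psdmx (1%:M - (k%:R : R)^-1 *: (ones k *m (ones k)^T)).
Proof.
move=> k0; set c := (k%:R : R)^-1.
have kc : (k%:R : R) * c = 1 by rewrite /c mulfV // pnatr_eq0 -lt0n.
have c0 : 0 <= c by rewrite /c invr_ge0 ler0n.
split.
  by rewrite /Defs.symmetricmx raddfB /= tr_scalar_mx linearZ /= trmx_mul trmxK.
move=> u.
rewrite mulmxBr mulmx1 mulmxBl -scalemxAr scalemxAl.
have -> : c *: u *m (ones k *m (ones k)^T) *m u^T = c *: ((u *m ones k) *m (u *m ones k)^T).
  by rewrite -!scalemxAl trmx_mul !mulmxA.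
rewrite !mxE big_ord1 !mxE.
have -> : \sum_j u 0 j * ones k j ord0 = \sum_(j < k) u 0 j.
  by apply: eq_bigr => j _; rewrite !mxE mulr1.
have -> : \sum_(j < k) u 0 j * u^T j 0 = \sum_(j < k) u 0 j ^+ 2.
  by apply: eq_bigr => j _; rewrite !mxE expr2.
have H := cauchy (fun j => u 0 j).
set S := \sum_(j < k) u 0 j in H *; set Q := \sum_(j < k) u 0 j ^+ 2 in H *.
have : c * S ^+ 2 <= c * (k%:R * Q) by rewrite ler_wpM2l.
move=> h; rewrite subr_ge0; apply: (le_trans h); rewrite mulrA (mulrC c) kc mul1r; exact: lexx.
Qed.

Lemma feas_equiv n k (E : rel 'I_n) (Z : 'M[R]_n) : (0 < k)%N ->
  (exists X : 'M[R]_(n, k), feas1 E Z X) <-> feas3 k E Z.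
Proof.
move=> k0; split.
  case=> X [cf [HZ [HX Hp]]]; split => //.
  by rewrite (lmi3_congr HZ); apply: psd_congr.
case=> cf Hp.
have kc : (k%:R : R) * (k%:R)^-1 = 1 by rewrite mulfV // pnatr_eq0 -lt0n.
have c0 : 0 <= (k%:R : R)^-1 by rewrite invr_ge0 ler0n.
have Xe : forall i r, ((k%:R : R)^-1 *: (diagv Z *m (ones k)^T)) i r = (k%:R)^-1 * Z i i.
  by move=> i r; rewrite !mxE big_ord1 !mxE mulr1.
exists ((k%:R : R)^-1 *: (diagv Z *m (ones k)^T)); split => //; split; last split.
- move=> i; under eq_bigr do rewrite Xe.
  by rewrite sumr_const card_ord -[_ *+ k]mulr_natl mulrA kc mul1r.
- move=> i r; rewrite Xe; apply: mulr_ge0 => //; case: cf => _ [_ [_ nn]]; exact: nn.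
- rewrite (lmi1_decomp Z k0); apply: psdD; apply: psd_congr => //; exact: psdM.
Qed.

Lemma quad3_scal n k e (u : 'rV[R]_1) (w : 'rV[R]_n) :
  (row_mx u w *m lmi3 k (e%:M) *m (row_mx u w)^T) 0 0 =
  k%:R * u 0 0 ^+ 2 + 2 * e * u 0 0 * (\sum_j w 0 j) + e * \sum_j w 0 j ^+ 2.
Proof.
have dE : diagv (e%:M : 'M[R]_n) = e *: ones n.
  by apply/matrixP => i j; rewrite !mxE eqxx mulr1n mulr1.
rewrite /lmi3 quad_block dE linearZ /= !mul_mx_scalar.
rewrite !mxE !big_ord1 !mxE.
have -> : \sum_j w 0 j * ones n j ord0 = \sum_j w 0 j.
  by apply: eq_bigr => j _; rewrite !mxE mulr1.
have -> : \sum_j (u *m (e *: ones n)^T) 0 j * w^T j 0 = e * u 0 0 * \sum_j w 0 j.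
  rewrite mulr_sumr; apply: eq_bigr => j _; rewrite !mxE big_ord1 !mxE mulr1.
  change (u 0 ord0) with (u 0 0); ring.
rewrite [X in _ + (_ + X)](_ : _ = e * \sum_j w 0 j ^+ 2); last first.
  by rewrite mulr_sumr; apply: eq_bigr => j _; rewrite !mxE; ring.
change (u 0 ord0) with (u 0 0); ring.
Qed.

Lemma strict n k (E : rel 'I_n) : simple_graph E -> (0 < k)%N ->
  exists Z : 'M[R]_n, common_feas E Z /\ pdmx (lmi3 k Z).
Proof.
move=> [_ irr] k0.
set e := ((n.+1)%:R : R)^-1.
have e0 : 0 < e by rewrite invr_gt0 ltr0n.
have e1 : e <= 1 by rewrite /e invf_le1 ?ler1n ?ltr0n.
have ne : (n%:R : R) * e + e = 1.
  by rewrite -{2}(mul1r e) -mulrDl natr1 mulfV // pnatr_eq0.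
exists (e%:M); split.
  split; first by rewrite /Defs.symmetricmx tr_scalar_mx.
  split.
    move=> i j Eij; rewrite mxE; case: eqP => [eij|]; last by rewrite mulr0n.
    by move: (irr j); rewrite -{1}eij Eij.
  split; first by move=> i; rewrite mxE eqxx mulr1n.
  by move=> i j; rewrite mxE; case: (i == j); rewrite ?mulr1n ?mulr0n // ltW.
split.
  by rewrite /Defs.symmetricmx /lmi3 tr_block_mx trmxK !tr_scalar_mx.
move=> v vn0.
rewrite -(hsubmxK v) quad3_scal.
set u := lsubmx v; set w := rsubmx v.
have H := cauchy (fun j => w 0 j).
set a := u 0 0; set S := \sum_(j < n) w 0 j; set Q := \sum_(j < n) w 0 j ^+ 2.
rewrite -/S -/Q in H.
have Q0 : 0 <= Q by apply: sumr_ge0 => i _; exact: sqr_ge0.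
have k1 : 1 <= (k%:R : R) by rewrite ler1n.
have [Qz|Qp] := eqVneq Q 0.
  have w0 : forall j, w 0 j = 0.
    move=> j; apply/eqP; rewrite -sqrf_eq0; apply/eqP.
    by move/eqP: Qz; rewrite psumr_eq0 => [/allP/(_ j (mem_index_enum j))/eqP|i _]; [|exact: sqr_ge0].
  have S0 : S = 0 by rewrite /S big1.
  have a0 : a != 0.
    apply: contraNneq vn0 => a0; rewrite -(hsubmxK v); apply/eqP/matrixP => i j.
    rewrite !mxE; case: splitP => l _.
      by rewrite -[RHS]a0 /a /u (ord1 i) (ord1 l) mxE.
    by rewrite (ord1 i); exact: w0.
  rewrite Qz S0 !mulr0 !addr0.
  apply: mulr_gt0; first by apply: lt_le_trans k1.
  by rewrite exprn_even_gt0.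
have Qp' : 0 < Q by rewrite lt_def Qp Q0.
have h1 : e ^+ 2 * S ^+ 2 <= e ^+ 2 * (n%:R * Q) by rewrite ler_wpM2l // sqr_ge0.
have h2 := sqr_ge0 (a + e * S).
have h3 : 0 < e ^+ 2 * Q by rewrite mulr_gt0 // exprn_gt0.
have h4 : e * Q = e ^+ 2 * (n%:R * Q) + e ^+ 2 * Q.
  by rewrite -(mul1r (e * Q)) -{1}ne; ring.
have h5 : 0 <= (k%:R - 1) * a ^+ 2 by rewrite mulr_ge0 ?subr_ge0 ?sqr_ge0.
nra.
Qed.
End S.

Theorem theorem5 (R : realType) (n k : nat) (E : rel 'I_n) :
  simple_graph E -> (0 < k)%N ->
  @opt1 R n k E = @theta3 R n k E /\ @strictly_feasible3 R n k E.
Proof.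
move=> sg k0; split; last exact: strict.
rewrite /opt1 /theta3.
have -> : ([set Z : 'M[R]_n | exists X : 'M[R]_(n, k), feas1 E Z X] =
          [set Z | feas3 k E Z])%classic.
  by apply: boolp.funext => Z; apply: boolp.propext; exact: feas_equiv.
by [].
Qed.
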